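(* Let $\lambda>0$, $p\in\mathbb{N}$, and let $f\in C^p\left[0,\frac12\lambda^{-1/2}\right]$ be complex-valued with $f(0)=0$ and $\max_{[0,\frac12\lambda^{-1/2}]}|f^{(p)}|\le C(p)\,\lambda^{\frac p2+1}$ for some constant $C(p)>0$. Then for all $\varphi_0,\varphi_1\in\mathbb{R}$, $$\int_0^{\frac12\lambda^{-1/2}}\left|f(t)-e^{i\varphi_1t+i\varphi_0}\right|^2dt\ \ge\ \frac{\lambda^{-1/2}}{9}\min\left\{4^{-p-\frac52},\ 4^{-\frac{p+3}{2}}\,6^{\frac1p}\,C(p)^{-\frac1p}\,\lambda^{-\frac1p}\right\}.$$ *)

(* Defs.v *)
From Stdlib Require Import Reals.
From Coquelicot Require Import Coquelicot.
Open Scope R_scope.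

Definition cexpi (theta : R) : C := (cos theta, sin theta).

Definition is_derive_within (a b : R) (g : R -> C) (x : R) (l : C) : Prop :=
  filterlim (fun h : R => scal (/ h) (minus (g (x + h)) (g x)))
    (within (fun h : R => h <> 0 /\ a <= x + h <= b) (locally 0))
    (locally l).

Definition continuous_on_cc (a b : R) (g : R -> C) : Prop :=
  forall x, a <= x <= b ->
    filterlim g (within (fun y : R => a <= y <= b) (locally x)) (locally (g x)).

(* D is a witness that f is in C^p[a,b]: D 0 = f on [a,b], D (k+1) is the
   derivative of D k on [a,b] for k < p, and D k is continuous on [a,b]
   for k <= p.  D p is then the p-th derivative f^(p) on [a,b]. *)
Definition Cp_derivs (p : nat) (a b : R) (f : R -> C) (D : nat -> R -> C) : Prop :=
  (forall x, a <= x <= b -> D 0%nat x = f x) /\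
  (forall k, (k < p)%nat -> forall x, a <= x <= b ->
     is_derive_within a b (D k) x (D (S k) x)) /\
  (forall k, (k <= p)%nat -> continuous_on_cc a b (D k)).

(* Main.v *)
Require Import Defs.
From Stdlib Require Import Reals Lra Lia Factorial Classical ClassicalEpsilon.
From Coquelicot Require Import Coquelicot.
Open Scope R_scope.

Lemma ballR (x e y : R) : ball x e y <-> Rabs (y - x) < e.
Proof. split; intro H; exact H. Qed.

Definition clamp (a b x : R) : R := Rmax a (Rmin b x).

Lemma clamp_in a b x : a <= b -> a <= clamp a b x <= b.
Proof. intros; unfold clamp, Rmax, Rmin; repeat destruct Rle_dec; lra. Qed.

Lemma clamp_id a b x : a <= x <= b -> clamp a b x = x.
Proof. intros; unfold clamp, Rmax, Rmin; repeat destruct Rle_dec; lra. Qed.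

Lemma clamp_lip a b x y : a <= b -> Rabs (clamp a b x - clamp a b y) <= Rabs (x - y).
Proof. intros; unfold clamp, Rmax, Rmin; repeat destruct Rle_dec;
  unfold Rabs; repeat destruct Rcase_abs; lra. Qed.

Lemma clamp_filterlim a b x : a <= b ->
  filterlim (clamp a b) (locally x)
    (within (fun z => a <= z <= b) (locally (clamp a b x))).
Proof.
  intros Hab P [eps Heps].
  exists eps. intros y Hy.
  apply Heps.
  - pose proof (proj1 (ballR _ _ _) Hy) as Hy2. apply ballR.
    pose proof (clamp_lip a b y x Hab). lra.
  - apply clamp_in; auto.
Qed.

Lemma clamp_cont a b x : a <= b -> continuous (clamp a b) x.
Proof.
  intros Hab P [eps Heps]. exists eps. intros y Hy. apply Heps.
  pose proof (proj1 (ballR _ _ _) Hy) as Hy2. apply ballR.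
  pose proof (clamp_lip a b y x Hab). lra.
Qed.

Lemma cont_clamp {U : UniformSpace} (g : R -> U) a b x : a <= b ->
  (forall y, a <= y <= b ->
     filterlim g (within (fun z => a <= z <= b) (locally y)) (locally (g y))) ->
  continuous (fun z => g (clamp a b z)) x.
Proof.
  intros Hab Hg. unfold continuous.
  eapply filterlim_comp. apply clamp_filterlim; auto.
  apply Hg. apply clamp_in; auto.
Qed.

Lemma Cmod_sq (z : C) : Cmod z ^ 2 = fst z ^ 2 + snd z ^ 2.
Proof.
  unfold Cmod. rewrite pow2_sqrt; auto.
  apply Rplus_le_le_0_compat; apply pow2_ge_0.
Qed.

Lemma cont_R_plus (f g : R -> R) x : continuous f x -> continuous g x ->
  continuous (fun t => f t + g t) x.
Proof. intros; apply (continuous_plus f g); auto. Qed.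

Lemma cont_R_minus (f g : R -> R) x : continuous f x -> continuous g x ->
  continuous (fun t => f t - g t) x.
Proof. intros; apply (continuous_minus f g); auto. Qed.

Lemma cont_R_mult (f g : R -> R) x : continuous f x -> continuous g x ->
  continuous (fun t => f t * g t) x.
Proof. intros; apply (continuous_mult f g); auto. Qed.

Lemma cont_fst_comp (h : R -> C) x : continuous h x -> continuous (fun t => fst (h t)) x.
Proof.
  intros H. apply continuous_comp; auto. destruct (h x). apply continuous_fst.
Qed.

Lemma cont_snd_comp (h : R -> C) x : continuous h x -> continuous (fun t => snd (h t)) x.
Proof.
  intros H. apply continuous_comp; auto. destruct (h x). apply continuous_snd.
Qed.

Section Integral.
Variables (f : R -> C) (L phi0 phi1 : R).
Hypothesis HL : 0 < L.
Hypothesis Hf : forall y, 0 <= y <= L ->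
  filterlim f (within (fun z => 0 <= z <= L) (locally y)) (locally (f y)).

Let th t := phi1 * t + phi0.
Let G t := (fst (f (clamp 0 L t)) - cos (th t)) ^ 2 + (snd (f (clamp 0 L t)) - sin (th t)) ^ 2.

Lemma G_cont x : continuous G x.
Proof.
  assert (Hc : continuous (fun z => f (clamp 0 L z)) x) by (apply cont_clamp; auto; lra).
  assert (Hth : continuous th x).
  { unfold th. apply cont_R_plus. apply cont_R_mult. apply continuous_const.
    apply continuous_id. apply continuous_const. }
  unfold G. apply cont_R_plus; simpl; repeat apply cont_R_mult;
  try apply continuous_const;
  try apply cont_R_minus;
  try (apply cont_fst_comp; exact Hc); try (apply cont_snd_comp; exact Hc);
  try (apply continuous_cos_comp; exact Hth); try (apply continuous_sin_comp; exact Hth).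
Qed.

Lemma G_ex a b : ex_RInt G a b.
Proof. apply (@ex_RInt_continuous R_CompleteNormedModule); intros; apply G_cont. Qed.

Lemma G_eq t : 0 <= t <= L -> G t = Cmod (f t - cexpi (phi1 * t + phi0)) ^ 2.
Proof.
  intros Ht. unfold G. rewrite clamp_id; auto. rewrite Cmod_sq.
  unfold cexpi, th. destruct (f t). simpl. ring.
Qed.

Lemma int_lower u v c : 0 <= u <= v -> v <= L ->
  (forall t, u < t < v -> c <= Cmod (f t - cexpi (phi1 * t + phi0)) ^ 2) ->
  c * (v - u) <= RInt (fun t => Cmod (f t - cexpi (phi1 * t + phi0)) ^ 2) 0 L.
Proof.
  intros Huv HvL Hc.
  rewrite <- (RInt_ext G).
  2:{ intros x Hx. rewrite Rmin_left in Hx by lra. rewrite Rmax_right in Hx by lra.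
      apply G_eq; lra. }
  rewrite <- (RInt_Chasles G 0 u L) by apply G_ex.
  rewrite <- (RInt_Chasles G u v L) by apply G_ex.
  assert (H0 : 0 <= RInt G 0 u).
  { apply RInt_ge_0. lra. apply G_ex. intros; unfold G; apply Rplus_le_le_0_compat; apply pow2_ge_0. }
  assert (H1 : 0 <= RInt G v L).
  { apply RInt_ge_0. lra. apply G_ex. intros; unfold G; apply Rplus_le_le_0_compat; apply pow2_ge_0. }
  assert (H2 : c * (v - u) <= RInt G u v).
  { rewrite <- (Rmult_comm (v - u)).
    replace ((v - u) * c) with (RInt (fun _ => c) u v).
    2:{ rewrite RInt_const. reflexivity. }
    apply RInt_le. lra. apply ex_RInt_const. apply G_ex.
    intros x Hx. rewrite G_eq by lra. apply Hc; auto. }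
  change plus with Rplus. lra.
Qed.

End Integral.

Lemma within_deriv_fst a b (g : R -> C) x l : a < x < b ->
  is_derive_within a b g x l -> derivable_pt_lim (fun s => fst (g s)) x (fst l).
Proof.
  intros Hx Hd eps Heps.
  assert (Hloc : locally l (fun z : C => ball l eps z)).
  { exists (mkposreal eps Heps). intros z Hz. exact Hz. }
  specialize (Hd _ Hloc). destruct Hd as [d Hd].
  assert (Hdp : 0 < Rmin d (Rmin (x - a) (b - x))).
  { destruct d as [d dp]. simpl. repeat apply Rmin_pos; lra. }
  exists (mkposreal _ Hdp). intros h Hh0 Hh. simpl in Hh.
  assert (Hh1 : Rabs h < d) by (eapply Rlt_le_trans; [exact Hh| apply Rmin_l]).
  assert (Hh2 : Rabs h < Rmin (x - a) (b - x)) by (eapply Rlt_le_trans; [exact Hh| apply Rmin_r]).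
  assert (Hab1 : Rabs h < x - a) by (eapply Rlt_le_trans; [exact Hh2| apply Rmin_l]).
  assert (Hab2 : Rabs h < b - x) by (eapply Rlt_le_trans; [exact Hh2| apply Rmin_r]).
  assert (Hb : ball 0 d h).
  { apply ballR. rewrite Rminus_0_r. exact Hh1. }
  specialize (Hd h Hb).
  assert (HD : h <> 0 /\ a <= x + h <= b).
  { split; auto. unfold Rabs in *; destruct Rcase_abs; lra. }
  specialize (Hd HD). destruct Hd as [H1 H2].
  unfold Rdiv. rewrite Rmult_comm. exact H1.
Qed.

Lemma within_deriv_snd a b (g : R -> C) x l : a < x < b ->
  is_derive_within a b g x l -> derivable_pt_lim (fun s => snd (g s)) x (snd l).
Proof.
  intros Hx Hd eps Heps.
  assert (Hloc : locally l (fun z : C => ball l eps z)).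
  { exists (mkposreal eps Heps). intros z Hz. exact Hz. }
  specialize (Hd _ Hloc). destruct Hd as [d Hd].
  assert (Hdp : 0 < Rmin d (Rmin (x - a) (b - x))).
  { destruct d as [d dp]. simpl. repeat apply Rmin_pos; lra. }
  exists (mkposreal _ Hdp). intros h Hh0 Hh. simpl in Hh.
  assert (Hh1 : Rabs h < d) by (eapply Rlt_le_trans; [exact Hh| apply Rmin_l]).
  assert (Hh2 : Rabs h < Rmin (x - a) (b - x)) by (eapply Rlt_le_trans; [exact Hh| apply Rmin_r]).
  assert (Hab1 : Rabs h < x - a) by (eapply Rlt_le_trans; [exact Hh2| apply Rmin_l]).
  assert (Hab2 : Rabs h < b - x) by (eapply Rlt_le_trans; [exact Hh2| apply Rmin_r]).
  assert (Hb : ball 0 d h).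
  { apply ballR. rewrite Rminus_0_r. exact Hh1. }
  specialize (Hd h Hb).
  assert (HD : h <> 0 /\ a <= x + h <= b).
  { split; auto. unfold Rabs in *; destruct Rcase_abs; lra. }
  specialize (Hd HD). destruct Hd as [H1 H2].
  unfold Rdiv. rewrite Rmult_comm. exact H2.
Qed.

Lemma mono_le (phi dphi : R -> R) a b : a < b ->
  (forall y, a <= y <= b ->
     filterlim phi (within (fun z => a <= z <= b) (locally y)) (locally (phi y))) ->
  (forall x, a < x < b -> derivable_pt_lim phi x (dphi x)) ->
  (forall x, a < x < b -> dphi x <= 0) -> phi b <= phi a.
Proof.
  intros Hab Hc Hd Hneg.
  set (psi := fun z => phi (clamp a b z)).
  destruct (MVT_gen psi a b (fun x => Rmin 0 (dphi x))) as [c [Hc1 Hc2]].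
  - rewrite Rmin_left, Rmax_right by lra. intros x Hx.
    rewrite Rmin_right by (apply Hneg; auto).
    apply is_derive_Reals. intros eps Heps.
    destruct (Hd x Hx eps Heps) as [d Hd'].
    assert (Hdp : 0 < Rmin d (Rmin (x - a) (b - x))).
    { destruct d as [d dp]. simpl. repeat apply Rmin_pos; lra. }
    exists (mkposreal _ Hdp). intros h Hh0 Hh. simpl in Hh.
    assert (Hh1 : Rabs h < d) by (eapply Rlt_le_trans; [exact Hh| apply Rmin_l]).
    assert (Hh2 : Rabs h < Rmin (x - a) (b - x)) by (eapply Rlt_le_trans; [exact Hh| apply Rmin_r]).
    assert (Hab1 : Rabs h < x - a) by (eapply Rlt_le_trans; [exact Hh2| apply Rmin_l]).
    assert (Hab2 : Rabs h < b - x) by (eapply Rlt_le_trans; [exact Hh2| apply Rmin_r]).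
    unfold psi. rewrite (clamp_id a b x) by lra.
    rewrite (clamp_id a b (x + h)).
    2:{ unfold Rabs in *; destruct Rcase_abs; lra. }
    apply Hd'; auto.
  - rewrite Rmin_left, Rmax_right by lra. intros x Hx.
    apply continuity_pt_filterlim. apply (cont_clamp phi a b x). lra. exact Hc.
  - unfold psi in Hc2. rewrite (clamp_id a b b) in Hc2 by lra.
    rewrite (clamp_id a b a) in Hc2 by lra.
    assert (Rmin 0 (dphi c) <= 0) by apply Rmin_l.
    nra.
Qed.

Lemma within_sub {U : UniformSpace} (g : R -> U) a b a' b' y :
  a <= a' -> b' <= b -> a' <= y <= b' ->
  filterlim g (within (fun z => a <= z <= b) (locally y)) (locally (g y)) ->
  filterlim g (within (fun z => a' <= z <= b') (locally y)) (locally (g y)).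
Proof.
  intros H1 H2 Hy H P HP. specialize (H P HP).
  unfold filtermap, within in *. destruct H as [e He]. exists e.
  intros z Hz Hz'. apply He; auto. lra.
Qed.

Lemma within_fst (g : R -> C) a b y :
  filterlim g (within (fun z => a <= z <= b) (locally y)) (locally (g y)) ->
  filterlim (fun s => fst (g s)) (within (fun z => a <= z <= b) (locally y)) (locally (fst (g y))).
Proof.
  intros H. eapply filterlim_comp. exact H.
  destruct (g y). apply continuous_fst.
Qed.

Lemma within_snd (g : R -> C) a b y :
  filterlim g (within (fun z => a <= z <= b) (locally y)) (locally (g y)) ->
  filterlim (fun s => snd (g s)) (within (fun z => a <= z <= b) (locally y)) (locally (snd (g y))).
Proof.
  intros H. eapply filterlim_comp. exact H.
  destruct (g y). apply continuous_snd.
Qed.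

Lemma mono_le2 (phi dphi : R -> R) a b : a < b ->
  (forall y, a <= y <= b -> continuous (fun z => phi (clamp a b z)) y) ->
  (forall x, a < x < b -> derivable_pt_lim phi x (dphi x)) ->
  (forall x, a < x < b -> dphi x <= 0) -> phi b <= phi a.
Proof.
  intros Hab Hc Hd Hneg.
  set (psi := fun z => phi (clamp a b z)).
  destruct (MVT_gen psi a b (fun x => Rmin 0 (dphi x))) as [c [Hc1 Hc2]].
  - rewrite Rmin_left, Rmax_right by lra. intros x Hx.
    rewrite Rmin_right by (apply Hneg; auto).
    apply is_derive_Reals. intros eps Heps.
    destruct (Hd x Hx eps Heps) as [d Hd'].
    assert (Hdp : 0 < Rmin d (Rmin (x - a) (b - x))).
    { destruct d as [d dp]. simpl. repeat apply Rmin_pos; lra. }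
    exists (mkposreal _ Hdp). intros h Hh0 Hh. simpl in Hh.
    assert (Hh1 : Rabs h < d) by (eapply Rlt_le_trans; [exact Hh| apply Rmin_l]).
    assert (Hh2 : Rabs h < Rmin (x - a) (b - x)) by (eapply Rlt_le_trans; [exact Hh| apply Rmin_r]).
    assert (Hab1 : Rabs h < x - a) by (eapply Rlt_le_trans; [exact Hh2| apply Rmin_l]).
    assert (Hab2 : Rabs h < b - x) by (eapply Rlt_le_trans; [exact Hh2| apply Rmin_r]).
    unfold psi. rewrite (clamp_id a b x) by lra.
    rewrite (clamp_id a b (x + h)).
    2:{ unfold Rabs in *; destruct Rcase_abs; lra. }
    apply Hd'; auto.
  - rewrite Rmin_left, Rmax_right by lra. intros x Hx.
    apply continuity_pt_filterlim. apply Hc. lra.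
  - unfold psi in Hc2. rewrite (clamp_id a b b) in Hc2 by lra.
    rewrite (clamp_id a b a) in Hc2 by lra.
    assert (Rmin 0 (dphi c) <= 0) by apply Rmin_l.
    nra.
Qed.

Lemma CS2 (x0 y0 a1 a2 : R) : x0 * a1 + y0 * a2 <= Cmod (x0, y0) * Cmod (a1, a2).
Proof.
  unfold Cmod; simpl.
  rewrite <- sqrt_mult by nra.
  destruct (Rle_dec (x0 * a1 + y0 * a2) 0).
  - pose proof (sqrt_pos ((x0 * (x0 * 1) + y0 * (y0 * 1)) * (a1 * (a1 * 1) + a2 * (a2 * 1)))). lra.
  - rewrite <- (sqrt_Rsqr (x0 * a1 + y0 * a2)) by lra.
    apply sqrt_le_1_alt. unfold Rsqr. pose proof (pow2_ge_0 (x0*a2 - y0*a1)). nra.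
Qed.

Lemma cmvt (h dh : R -> C) L t K m : 0 < L -> 0 <= t <= L -> 0 <= K ->
  h 0 = 0%C ->
  (forall y, 0 <= y <= L ->
     filterlim h (within (fun z => 0 <= z <= L) (locally y)) (locally (h y))) ->
  (forall x, 0 < x < L -> is_derive_within 0 L h x (dh x)) ->
  (forall s, 0 <= s <= t -> Cmod (dh s) <= K * s ^ m) ->
  Cmod (h t) <= K * t ^ (S m) / INR (S m).
Proof.
  intros HL Ht HK H0 Hc Hd Hb.
  assert (HSm : 0 < INR (S m)) by (apply lt_0_INR; lia).
  destruct (Req_dec t 0) as [Ht0|Ht0].
  { subst t. rewrite H0. simpl. unfold Cmod. simpl.
    replace (0 * (0 * 1) + 0 * (0 * 1)) with 0 by ring. rewrite sqrt_0.
    unfold Rdiv. rewrite Rmult_0_l, !Rmult_0_r, Rmult_0_l. lra. }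
  set (w := h t). set (x0 := fst w). set (y0 := snd w).
  set (c := Cmod w * K / INR (S m)).
  set (phi := fun s => x0 * fst (h s) + y0 * snd (h s) - c * s ^ (S m)).
  set (dphi := fun s => x0 * fst (dh s) + y0 * snd (dh s) - c * (INR (S m) * s ^ m)).
  assert (Hmono : phi t <= phi 0).
  { apply (mono_le2 phi dphi 0 t). lra.
    - intros y Hy.
      assert (Hhc : continuous (fun z => h (clamp 0 t z)) y).
      { apply cont_clamp. lra. intros y' Hy'. apply (within_sub h 0 L). lra. lra. auto.
        apply Hc. lra. }
      assert (Hcl : continuous (fun z => clamp 0 t z) y).
      { apply clamp_cont. lra. }
      unfold phi. apply cont_R_minus. apply cont_R_plus.
      apply cont_R_mult. apply continuous_const. apply cont_fst_comp; auto.
      apply cont_R_mult. apply continuous_const. apply cont_snd_comp; auto.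
      apply cont_R_mult. apply continuous_const.
      apply (continuous_comp (fun z => clamp 0 t z) (fun s => s ^ S m)). auto.
      apply continuity_pt_filterlim. apply derivable_continuous_pt.
      apply derivable_pt_pow.
    - intros x Hx. apply is_derive_Reals. unfold phi, dphi.
      assert (D1 : is_derive (fun s => fst (h s)) x (fst (dh x))).
      { apply is_derive_Reals. apply (within_deriv_fst 0 L). lra. apply Hd. lra. }
      assert (D2 : is_derive (fun s => snd (h s)) x (snd (dh x))).
      { apply is_derive_Reals. apply (within_deriv_snd 0 L). lra. apply Hd. lra. }
      apply (is_derive_minus (fun s => x0 * fst (h s) + y0 * snd (h s)) (fun s => c * s ^ S m)).
      apply (is_derive_plus (fun s => x0 * fst (h s)) (fun s => y0 * snd (h s))).
      apply is_derive_scal; auto. apply is_derive_scal; auto.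
      apply is_derive_scal.
      replace (INR (S m) * x ^ m) with (INR (S m) * 1 * x ^ Init.Nat.pred (S m)) by (simpl; ring).
      apply (is_derive_pow (fun s => s)). exact (@is_derive_id R_AbsRing x).
    - intros x Hx. unfold dphi.
      pose proof (CS2 x0 y0 (fst (dh x)) (snd (dh x))) as HCS.
      assert (Hw : Cmod (x0, y0) = Cmod w) by (unfold x0, y0; destruct w; reflexivity).
      assert (Hdx : Cmod (fst (dh x), snd (dh x)) = Cmod (dh x)) by (destruct (dh x); reflexivity).
      rewrite Hw, Hdx in HCS.
      assert (Hbx := Hb x ltac:(lra)).
      assert (Hcw : c * (INR (S m) * x ^ m) = Cmod w * (K * x ^ m)).
      { unfold c. field. lra. }
      rewrite Hcw.
      pose proof (Cmod_ge_0 w).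
      assert (Cmod w * Cmod (dh x) <= Cmod w * (K * x ^ m)) by (apply Rmult_le_compat_l; auto).
      lra. }
  unfold phi in Hmono. rewrite H0 in Hmono. simpl in Hmono.
  assert (Hsq : x0 * fst w + y0 * snd w = Cmod w ^ 2).
  { rewrite Cmod_sq. unfold x0, y0. ring. }
  fold w in Hmono. rewrite Hsq in Hmono.
  assert (Hc0 : Cmod w ^ 2 <= Cmod w * (K * t ^ S m / INR (S m))).
  { unfold c in Hmono. replace (Cmod w * (K * t ^ S m / INR (S m))) with
      (Cmod w * K / INR (S m) * t ^ S m) by (field; lra). simpl in Hmono |- *. lra. }
  pose proof (Cmod_ge_0 w).
  destruct (Req_dec (Cmod w) 0) as [Hw0|Hw0].
  - rewrite Hw0. apply Rmult_le_pos. apply Rmult_le_pos; auto. apply pow_le; lra.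
    left. apply Rinv_0_lt_compat; auto.
  - apply (Rmult_le_reg_l (Cmod w)). lra. replace (Cmod w ^ 2) with (Cmod w * Cmod w) in Hc0 by ring. exact Hc0.
Qed.
Lemma wd_minus a b (g1 g2 : R -> C) x l1 l2 :
  is_derive_within a b g1 x l1 -> is_derive_within a b g2 x l2 ->
  is_derive_within a b (fun s => g1 s - g2 s)%C x (l1 - l2)%C.
Proof.
  unfold is_derive_within. intros H1 H2.
  apply filterlim_ext with (fun h => plus (scal (/ h) (minus (g1 (x + h)) (g1 x)))
                                    (opp (scal (/ h) (minus (g2 (x + h)) (g2 x))))).
  { intros h. apply injective_projections; simpl;
    unfold plus, opp, scal, mult; simpl; unfold mult, plus; simpl; ring. }
  eapply (filterlim_comp_2 _ _ (@plus C_AbelianGroup)). exact H1.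
  eapply filterlim_comp. exact H2. apply (@filterlim_opp R_AbsRing C_R_NormedModule).
  apply (@filterlim_plus R_AbsRing C_R_NormedModule).
Qed.

Lemma wc_minus (D : R -> Prop) (g1 g2 : R -> C) y :
  filterlim g1 (within D (locally y)) (locally (g1 y)) ->
  filterlim g2 (within D (locally y)) (locally (g2 y)) ->
  filterlim (fun s => g1 s - g2 s)%C (within D (locally y)) (locally (g1 y - g2 y)%C).
Proof.
  intros H1 H2.
  apply filterlim_ext with (fun s => plus (g1 s) (opp (g2 s))).
  { intros s. reflexivity. }
  eapply (filterlim_comp_2 _ _ (@plus C_AbelianGroup)). exact H1.
  eapply filterlim_comp. exact H2. apply (@filterlim_opp R_AbsRing C_R_NormedModule).
  apply (@filterlim_plus R_AbsRing C_R_NormedModule).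
Qed.

Lemma C_lim_comp {T} (F : (T -> Prop) -> Prop) {FF : Filter F} (q : T -> C) (l : C) :
  filterlim (fun t => fst (q t)) F (locally (fst l)) ->
  filterlim (fun t => snd (q t)) F (locally (snd l)) ->
  filterlim q F (locally l).
Proof.
  intros H1 H2 P [e He].
  assert (A1 : F (fun t => ball (fst l) e (fst (q t)))).
  { apply H1. exists e. intros z Hz. exact Hz. }
  assert (A2 : F (fun t => ball (snd l) e (snd (q t)))).
  { apply H2. exists e. intros z Hz. exact Hz. }
  unfold filtermap. eapply filter_imp; [| exact (filter_and _ _ A1 A2)].
  intros t [B1 B2]. apply He. destruct l, (q t). split; assumption.
Qed.

Lemma dpl_within (u : R -> R) x l a b : derivable_pt_lim u x l ->
  filterlim (fun h => / h * (u (x + h) - u x))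
    (within (fun h : R => h <> 0 /\ a <= x + h <= b) (locally 0)) (locally l).
Proof.
  intros Hd P [e He].
  destruct (Hd e (cond_pos e)) as [d Hdd].
  exists d. intros h Hh [Hh0 _]. apply He. apply ballR.
  pose proof (proj1 (ballR _ _ _) Hh) as Hh'. rewrite Rminus_0_r in Hh'.
  clear Hh. rename Hh' into Hh.
  specialize (Hdd h Hh0 Hh). unfold Rdiv in Hdd. rewrite Rmult_comm. exact Hdd.
Qed.

Lemma comp_to_wd (g : R -> C) x l a b :
  derivable_pt_lim (fun s => fst (g s)) x (fst l) ->
  derivable_pt_lim (fun s => snd (g s)) x (snd l) ->
  is_derive_within a b g x l.
Proof.
  intros H1 H2. unfold is_derive_within.
  refine (@C_lim_comp _ _ (within_filter _ _ _ (@filter_filter _ _ (locally_filter 0))) _ _ _ _).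
  - apply (dpl_within (fun s => fst (g s))); auto.
  - apply (dpl_within (fun s => snd (g s))); auto.
Qed.

Lemma comp_to_wc (g : R -> C) (D : R -> Prop) y :
  continuity_pt (fun s => fst (g s)) y ->
  continuity_pt (fun s => snd (g s)) y ->
  filterlim g (within D (locally y)) (locally (g y)).
Proof.
  intros H1 H2. apply continuity_pt_filterlim in H1. apply continuity_pt_filterlim in H2.
  refine (@C_lim_comp _ _ (within_filter _ _ _ (@filter_filter _ _ (locally_filter y))) _ _ _ _).
  - intros P HP. specialize (H1 P HP). unfold filtermap, within in *.
    destruct H1 as [e He]. exists e. intros; apply He; auto.
  - intros P HP. specialize (H2 P HP). unfold filtermap, within in *.
    destruct H2 as [e He]. exists e. intros; apply He; auto.
Qed.

Fixpoint rsum (n : nat) (f : nat -> R) : R :=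
  match n with O => 0 | S m => rsum m f + f m end.
Lemma rsum_ext n f g : (forall k, (k < n)%nat -> f k = g k) -> rsum n f = rsum n g.
Proof.
  induction n; intros H; simpl. reflexivity.
  rewrite IHn by (intros; apply H; lia). rewrite H by lia. reflexivity.
Qed.

Definition pev (n : nat) (c : nat -> R) (s : R) : R := rsum n (fun k => c k * s ^ k).
Fixpoint csum (n : nat) (f : nat -> C) : C :=
  match n with O => 0%C | S m => (csum m f + f m)%C end.
Definition cpev (n : nat) (a : nat -> C) (s : R) : C :=
  csum n (fun k => a k * RtoC (s ^ k))%C.

Lemma fst_cpev n a s : fst (cpev n a s) = pev n (fun k => fst (a k)) s.
Proof.
  unfold cpev, pev. induction n; simpl. reflexivity.
  rewrite IHn. ring.
Qed.

Lemma snd_cpev n a s : snd (cpev n a s) = pev n (fun k => snd (a k)) s.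
Proof.
  unfold cpev, pev. induction n; simpl. reflexivity.
  rewrite IHn. ring.
Qed.

Lemma pev_deriv n c x :
  derivable_pt_lim (pev n c) x (pev (pred n) (fun k => c (S k) * INR (S k)) x).
Proof.
  induction n.
  - simpl. unfold pev; simpl. apply derivable_pt_lim_const.
  - apply is_derive_Reals. apply is_derive_Reals in IHn.
    assert (E : pev (pred (S n)) (fun k => c (S k) * INR (S k)) x =
                pev (pred n) (fun k => c (S k) * INR (S k)) x + c n * (INR n * 1 * x ^ pred n)).
    { destruct n.
      - simpl. unfold pev; simpl. ring.
      - unfold pev. cbn [pred rsum]. ring. }
    rewrite E.
    apply (is_derive_plus (pev n c) (fun s => c n * s ^ n)). exact IHn.
    apply is_derive_scal. apply (is_derive_pow (fun s => s)). exact (@is_derive_id R_AbsRing x).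
Qed.

Lemma pev_cont n c x : continuity_pt (pev n c) x.
Proof.
  apply derivable_continuous_pt. exists (pev (pred n) (fun k => c (S k) * INR (S k)) x).
  apply pev_deriv.
Qed.

Lemma cpev_wd a b n (c : nat -> C) x :
  is_derive_within a b (cpev (S n) c) x (cpev n (fun k => c (S k) * RtoC (INR (S k)))%C x).
Proof.
  apply comp_to_wd.
  - rewrite fst_cpev.
    apply (derivable_pt_lim_ext (pev (S n) (fun k => fst (c k)))). { intros s. rewrite fst_cpev. reflexivity. }
    pose proof (pev_deriv (S n) (fun k => fst (c k)) x) as H. simpl pred in H.
    replace (pev n (fun k => fst (c (S k) * RtoC (INR (S k)))%C) x) with
      (pev n (fun k => fst (c (S k)) * INR (S k)) x). exact H.
    unfold pev. apply rsum_ext. intros k _. simpl. ring.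
  - rewrite snd_cpev.
    apply (derivable_pt_lim_ext (pev (S n) (fun k => snd (c k)))). { intros s. rewrite snd_cpev. reflexivity. }
    pose proof (pev_deriv (S n) (fun k => snd (c k)) x) as H. simpl pred in H.
    replace (pev n (fun k => snd (c (S k) * RtoC (INR (S k)))%C) x) with
      (pev n (fun k => snd (c (S k)) * INR (S k)) x). exact H.
    unfold pev. apply rsum_ext. intros k _. simpl. ring.
Qed.

Lemma cpev_wc n (c : nat -> C) (D : R -> Prop) y :
  filterlim (cpev n c) (within D (locally y)) (locally (cpev n c y)).
Proof.
  apply comp_to_wc.
  - apply continuity_pt_filterlim.
    apply (filterlim_ext (pev n (fun k => fst (c k)))). { intros s. rewrite fst_cpev. reflexivity. }
    rewrite fst_cpev. apply continuity_pt_filterlim. apply pev_cont.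
  - apply continuity_pt_filterlim.
    apply (filterlim_ext (pev n (fun k => snd (c k)))). { intros s. rewrite snd_cpev. reflexivity. }
    rewrite snd_cpev. apply continuity_pt_filterlim. apply pev_cont.
Qed.

Lemma cpev_0 n (c : nat -> C) : cpev (S n) c 0 = c O.
Proof.
  unfold cpev. induction n.
  - simpl. apply injective_projections; simpl; ring.
  - change (csum (S (S n)) (fun k => c k * RtoC (0 ^ k))%C) with
      (csum (S n) (fun k => c k * RtoC (0 ^ k)) + c (S n) * RtoC (0 ^ S n))%C.
    rewrite IHn. apply injective_projections; simpl; ring.
Qed.

Lemma csum_ext n f g : (forall k, (k < n)%nat -> f k = g k) -> csum n f = csum n g.
Proof.
  induction n; intros H; simpl. reflexivity.
  rewrite IHn by (intros; apply H; lia). rewrite H by lia. reflexivity.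
Qed.

Lemma fact_pos_R k : 0 < INR (fact k).
Proof. apply lt_0_INR. apply lt_O_fact. Qed.

Lemma taylor p L M f D : 0 < L -> 0 <= M -> Cp_derivs p 0 L f D ->
  (forall t, 0 <= t <= L -> Cmod (D p t) <= M) ->
  forall m, (m <= p)%nat -> forall t, 0 <= t <= L ->
  Cmod (D (p - m)%nat t - cpev m (fun k => D (p - m + k)%nat 0 * RtoC (/ INR (fact k)))%C t)
    <= M * t ^ m / INR (fact m).
Proof.
  intros HL HM [HD0 [HD1 HD2]] Hb m. induction m; intros Hm t Ht.
  - unfold cpev. simpl csum. rewrite Nat.sub_0_r.
    replace (D p t - 0)%C with (D p t) by (apply injective_projections; simpl; ring).
    simpl. replace (M * 1 / 1) with M by field. apply Hb; auto.
  - set (k0 := (p - S m)%nat).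
    set (a := fun k => (D (p - S m + k)%nat 0 * RtoC (/ INR (fact k)))%C).
    set (h := fun s => (D k0 s - cpev (S m) a s)%C).
    set (dh := fun s => (D (S k0) s - cpev m (fun k => a (S k) * RtoC (INR (S k))) s)%C).
    assert (Hk0 : (S k0 = p - m)%nat) by (unfold k0; lia).
    assert (Hcoef : forall k, (a (S k) * RtoC (INR (S k)))%C =
                    (D (p - m + k)%nat 0 * RtoC (/ INR (fact k)))%C).
    { intros k. unfold a. replace (p - S m + S k)%nat with (p - m + k)%nat by lia.
      rewrite <- Cmult_assoc, <- RtoC_mult. f_equal. f_equal.
      rewrite fact_simpl, mult_INR. pose proof (fact_pos_R k).
      assert (0 < INR (S k)) by (apply lt_0_INR; lia). field. lra. }
    assert (Hdh : forall s, dh s = (D (p - m)%nat s -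
               cpev m (fun k => D (p - m + k)%nat 0 * RtoC (/ INR (fact k))) s)%C).
    { intros s. unfold dh. rewrite Hk0. f_equal. unfold cpev. apply csum_ext.
      intros k _. rewrite Hcoef. reflexivity. }
    assert (HM' : 0 <= M / INR (fact m)).
    { apply Rmult_le_pos; auto. left; apply Rinv_0_lt_compat, fact_pos_R. }
    pose proof (cmvt h dh L t (M / INR (fact m)) m HL Ht HM') as Hc.
    replace (M / INR (fact m) * t ^ S m / INR (S m)) with (M * t ^ S m / INR (fact (S m))) in Hc.
    2:{ rewrite fact_simpl, mult_INR. pose proof (fact_pos_R m).
        assert (0 < INR (S m)) by (apply lt_0_INR; lia). field. lra. }
    apply Hc.
    + unfold h. rewrite cpev_0. unfold a. rewrite Nat.add_0_r. fold k0.
      simpl fact. replace (/ INR 1) with 1 by (simpl; field).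
      apply injective_projections; simpl; ring.
    + intros y Hy. unfold h. apply wc_minus. apply HD2. unfold k0; lia. auto.
      apply cpev_wc.
    + intros x Hx. unfold h, dh. apply wd_minus. apply HD1. unfold k0; lia. lra.
      apply cpev_wd.
    + intros s Hs. rewrite Hdh.
      replace (M / INR (fact m) * s ^ m) with (M * s ^ m / INR (fact m)) by (unfold Rdiv; ring).
      apply IHm. lia. lra.
Qed.


Fixpoint rprod (n : nat) (f : nat -> R) : R :=
  match n with O => 1 | S m => rprod m f * f m end.

Lemma rsum_abs_ge n (y : nat -> R) j : (j < n)%nat -> Rabs (y j) <= rsum n (fun k => Rabs (y k)).
Proof.
  induction n; intros H. lia. simpl.
  destruct (Nat.eq_dec j n) as [->|Hne].
  - assert (0 <= rsum n (fun k => Rabs (y k))).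
    { clear. induction n; simpl. lra. pose proof (Rabs_pos (y n)). lra. }
    lra.
  - pose proof (IHn ltac:(lia)). pose proof (Rabs_pos (y n)). lra.
Qed.

Definition xext (n : nat) (y : nat -> R) (k : nat) : R :=
  if Nat.ltb k n then y k else 1 + rsum n (fun j => Rabs (y j)) + INR k.

Lemma xext_inj n y : (forall i j, (i < n)%nat -> (j < n)%nat -> i <> j -> y i <> y j) ->
  forall i j, xext n y i = xext n y j -> i = j.
Proof.
  intros Hy i j. unfold xext.
  assert (Hs : 0 <= rsum n (fun k => Rabs (y k))).
  { clear. induction n; simpl. lra. pose proof (Rabs_pos (y n)). lra. }
  destruct (Nat.ltb_spec0 i n) as [Hi|Hi]; destruct (Nat.ltb_spec0 j n) as [Hj|Hj]; intros E.
  - destruct (Nat.eq_dec i j); auto. exfalso; apply (Hy i j); auto.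
  - exfalso. pose proof (rsum_abs_ge n y i Hi). pose proof (pos_INR j).
    pose proof (Rle_abs (y i)). lra.
  - exfalso. pose proof (rsum_abs_ge n y j Hj). pose proof (pos_INR i).
    pose proof (Rle_abs (y j)). lra.
  - apply INR_eq. lra.
Qed.

Module MC.
From mathcomp Require Import all_boot all_algebra.
From mathcomp Require Import Rstruct.
Import GRing.Theory Num.Theory.
Local Open Scope ring_scope.

Lemma rsumE n f : rsum n f = \sum_(i < n) f i.
Proof. elim: n => [|n IH] /=; first by rewrite big_ord0. by rewrite big_ord_recr /= IH. Qed.

Lemma rprodE n f : rprod n f = \prod_(i < n) f i.
Proof. elim: n => [|n IH] /=; first by rewrite big_ord0. by rewrite big_ord_recr /= IH. Qed.

Lemma pevE n c t : pev n c t = (\poly_(i < n) c i).[t].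
Proof.
  rewrite /pev rsumE horner_poly. apply: eq_bigr => i _. by rewrite RpowE.
Qed.


Lemma lagrange_id n (c y : nat -> R) t : (0 < n)%N ->
  (forall i j, (i < n)%coq_nat -> (j < n)%coq_nat -> i <> j -> y i <> y j) ->
  pev n c t = rsum n (fun i => pev n c (y i) *
     rprod n (fun j => if Nat.eqb j i then 1%R else ((t - y j) / (y i - y j))%R)).
Proof.
move=> n_gt0 yinj.
pose x := xext n y.
have xinj : injective x.
  move=> i j E. by apply: (xext_inj n y yinj).
have xy : forall k, (k < n)%N -> x k = y k.
  move=> k kn. rewrite /x /xext. by have -> : Nat.ltb k n = true by apply/Nat.ltb_spec0/ltP.
pose P := \poly_(i < n) c i.
have sP : (size P <= n)%N by apply: size_poly.
have := lagrange_gen n_gt0 xinj sP.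
move=> HP.
rewrite !pevE -/P rsumE.
rewrite {1}HP horner_sum. apply: eq_bigr => i _ /=.
rewrite hornerM hornerC (lagrangeE n_gt0 xinj) /= hornerM hornerC (xy i (ltn_ord i)).
rewrite rprodE -/P pevE -/P.
congr (_ * _).
have E1 : forall z, (\prod_(j < n | j != i) ('X - (x j)%:P)).[z] = \prod_(j < n | j != i) (z - y j).
  move=> z; rewrite horner_prod; apply: eq_bigr => j _; by rewrite hornerXsubC xy.
rewrite !E1.
rewrite [RHS](bigD1 i) //= Nat.eqb_refl mul1r.
rewrite mulrC -prodf_div.
apply: eq_bigr => j jni.
have -> : Nat.eqb j i = false.
  apply/negP => /Nat.eqb_spec H. move: jni; rewrite -val_eqE /= H eqxx. by [].
by [].
Qed.

Lemma lagrange_id' n (c y : nat -> R) t : (0 < n)%coq_nat ->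
  (forall i j, (i < n)%coq_nat -> (j < n)%coq_nat -> i <> j -> y i <> y j) ->
  pev n c t = rsum n (fun i => pev n c (y i) *
     rprod n (fun j => if Nat.eqb j i then 1%R else ((t - y j) / (y i - y j))%R)).
Proof. move=> H; apply: lagrange_id. by apply/ltP. Qed.

End MC.


Lemma rprod_ext n f g : (forall k, (k < n)%nat -> f k = g k) -> rprod n f = rprod n g.
Proof.
  induction n; intros H; simpl. reflexivity.
  rewrite IHn by (intros; apply H; lia). rewrite H by lia. reflexivity.
Qed.

Lemma rsum_le n f g : (forall k, (k < n)%nat -> f k <= g k) -> rsum n f <= rsum n g.
Proof.
  induction n; intros H; simpl. lra.
  pose proof (IHn ltac:(intros; apply H; lia)). pose proof (H n ltac:(lia)). lra.
Qed.

Lemma rsum_abs n f : Rabs (rsum n f) <= rsum n (fun k => Rabs (f k)).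
Proof.
  induction n; simpl. rewrite Rabs_R0. lra.
  eapply Rle_trans. apply Rabs_triang. lra.
Qed.

Lemma rprod_abs n f : Rabs (rprod n f) = rprod n (fun k => Rabs (f k)).
Proof.
  induction n; simpl. apply Rabs_R1. rewrite Rabs_mult, IHn. reflexivity.
Qed.

Lemma rprod_nonneg n f : (forall k, (k < n)%nat -> 0 <= f k) -> 0 <= rprod n f.
Proof.
  induction n; intros H; simpl. lra.
  apply Rmult_le_pos. apply IHn; intros; apply H; lia. apply H; lia.
Qed.

Lemma rprod_le n f g : (forall k, (k < n)%nat -> 0 <= f k <= g k) -> rprod n f <= rprod n g.
Proof.
  induction n; intros H; simpl. lra.
  apply Rmult_le_compat.
  apply rprod_nonneg; intros; apply H; lia. apply H; lia.
  apply IHn; intros; apply H; lia. apply H; lia.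
Qed.

Lemma rprod_scale n f k : rprod n (fun j => f j * k) = rprod n f * k ^ n.
Proof. induction n; simpl. ring. rewrite IHn. ring. Qed.

Lemma rsum_scale n f k : rsum n (fun j => f j * k) = rsum n f * k.
Proof. induction n; simpl. ring. rewrite IHn. ring. Qed.

Lemma fact_INR_pos k : 0 < INR (fact k).
Proof. apply lt_0_INR. apply lt_O_fact. Qed.

Lemma binom_step n i : (i < n)%nat ->
  Binomial.C (S n) (S i) = Binomial.C n (S i) * (INR n + 1) / (INR n - INR i).
Proof.
  intros Hi. unfold Binomial.C.
  replace (S n - S i)%nat with (S (n - S i)) by lia.
  replace (n - i)%nat with (S (n - S i)) by lia.
  set (m := (n - S i)%nat).
  assert (Hm : INR n - INR i = INR (S m)).
  { unfold m. rewrite <- minus_INR by lia. f_equal. lia. }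
  rewrite Hm.
  rewrite (fact_simpl n), (fact_simpl m), !mult_INR.
  pose proof (fact_INR_pos n). pose proof (fact_INR_pos m). pose proof (fact_INR_pos (S i)).
  assert (0 < INR (S m)) by (apply lt_0_INR; lia).
  rewrite S_INR. field. repeat split; try lra.
Qed.

Lemma falling m k : (m <= k)%nat ->
  rprod m (fun j => (INR j + 1) / Rabs (INR k - INR j)) =
  INR (fact m) * INR (fact (k - m)) / INR (fact k).
Proof.
  induction m; intros Hmk.
  - simpl. rewrite Nat.sub_0_r. pose proof (fact_INR_pos k). field. lra.
  - simpl rprod. rewrite IHm by lia.
    assert (Hkm : Rabs (INR k - INR m) = INR (S (k - S m))).
    { rewrite <- minus_INR by lia. rewrite Rabs_right. f_equal. lia.
      apply Rle_ge, pos_INR. }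
    rewrite Hkm.
    replace (k - m)%nat with (S (k - S m)) by lia.
    rewrite (fact_simpl m), (fact_simpl (k - S m)), !mult_INR.
    pose proof (fact_INR_pos k). pose proof (fact_INR_pos (k - S m)).
    assert (0 < INR (S (k - S m))) by (apply lt_0_INR; lia).
    rewrite (S_INR m). field. lra.
Qed.

Lemma binom_nonneg n i : 0 <= Binomial.C n i.
Proof.
  unfold Binomial.C. pose proof (fact_INR_pos n). pose proof (fact_INR_pos i).
  pose proof (fact_INR_pos (n-i)). apply Rlt_le. apply Rdiv_lt_0_compat; auto.
  apply Rmult_lt_0_compat; auto.
Qed.

Definition Vw (n i : nat) : R :=
  rprod n (fun j => if Nat.eqb j i then 1 else (INR j + 1) / Rabs (INR i - INR j)).

Lemma Vw_binom n i : (i < n)%nat -> Vw n i = Binomial.C n (S i).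
Proof.
  revert i. induction n; intros i Hi. lia.
  unfold Vw. simpl rprod. fold (Vw n i).
  destruct (Nat.eq_dec i n) as [->|Hne].
  - rewrite Nat.eqb_refl, Rmult_1_r.
    unfold Vw. rewrite (rprod_ext n _ (fun j => (INR j + 1) / Rabs (INR n - INR j))).
    2:{ intros k Hk. destruct (Nat.eqb_spec k n). lia. reflexivity. }
    rewrite falling by lia. rewrite Nat.sub_diag.
    unfold Binomial.C. rewrite Nat.sub_diag. simpl (fact 0). simpl (INR 1).
    pose proof (fact_INR_pos n). pose proof (fact_INR_pos (S n)). field. lra.
  - assert (Hi' : (i < n)%nat) by lia.
    rewrite IHn by auto.
    destruct (Nat.eqb_spec n i). lia.
    rewrite binom_step by auto.
    rewrite Rabs_left1.
    2:{ apply lt_INR in Hi'. lra. }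
    assert (INR i < INR n) by (apply lt_INR; auto). field. lra.
Qed.

Lemma rsum_sum_f n f : sum_f_R0 f n = rsum (S n) f.
Proof. induction n; simpl. ring. rewrite IHn. simpl. ring. Qed.

Lemma binom_sum n : rsum n (fun i => Binomial.C n (S i)) <= 2 ^ n.
Proof.
  pose proof (binomial 1 1 n) as Hb.
  replace (1 + 1) with 2 in Hb by ring. rewrite Hb.
  rewrite rsum_sum_f.
  assert (E : forall m, (m <= n)%nat -> rsum (S m) (fun i => Binomial.C n i * 1 ^ i * 1 ^ (n - i)) =
            Binomial.C n 0 + rsum m (fun i => Binomial.C n (S i))).
  { induction m; intros Hm. simpl. rewrite !pow1. ring.
    change (rsum (S (S m)) (fun i => Binomial.C n i * 1 ^ i * 1 ^ (n - i))) with
      (rsum (S m) (fun i => Binomial.C n i * 1 ^ i * 1 ^ (n - i)) + Binomial.C n (S m) * 1 ^ (S m) * 1 ^ (n - S m)).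
    rewrite IHm by lia. simpl rsum. rewrite !pow1. ring. }
  rewrite E by lia.
  assert (0 <= Binomial.C n 0).
  { unfold Binomial.C. pose proof (fact_INR_pos n). pose proof (fact_INR_pos 0).
    pose proof (fact_INR_pos (n-0)). apply Rlt_le. apply Rdiv_lt_0_compat; auto. apply Rmult_lt_0_compat; auto. }
  lra.
Qed.

Lemma node_gap (y : nat -> R) h th i j : 0 < h -> 0 <= th < 1 ->
  (INR i + 1 - th) * h <= y i <= (INR i + 1) * h ->
  (INR j + 1 - th) * h <= y j <= (INR j + 1) * h -> i <> j ->
  Rabs (INR i - INR j) * (1 - th) * h <= Rabs (y i - y j).
Proof.
  intros Hh Hth Hi Hj Hij.
  destruct (Nat.lt_ge_cases i j) as [Hlt|Hge].
  - assert (H1 : INR i + 1 <= INR j) by (rewrite <- S_INR; apply le_INR; lia).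
    rewrite (Rabs_left1 (INR i - INR j)) by lra.
    rewrite (Rabs_left1 (y i - y j)) by nra.
    assert ((INR j - INR i) * (1 - th) <= INR j - INR i - th) by nra.
    nra.
  - assert (H1 : INR j + 1 <= INR i) by (rewrite <- S_INR; apply le_INR; lia).
    rewrite (Rabs_right (INR i - INR j)) by lra.
    rewrite (Rabs_right (y i - y j)) by nra.
    assert ((INR i - INR j) * (1 - th) <= INR i - INR j - th) by nra.
    nra.
Qed.

Lemma interp_bound n c y h th B t : 0 < h -> 0 <= th < 1 -> 0 <= B ->
  (forall j, (j < n)%nat -> (INR j + 1 - th) * h <= y j <= (INR j + 1) * h) ->
  (forall j, (j < n)%nat -> Rabs (pev n c (y j)) * y j <= B) ->
  0 <= t <= (1 - th) * h ->
  Rabs (pev n c t) * ((1 - th) ^ (S n) * h) <= B * 2 ^ n.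
Proof.
  intros Hh Hth HB Hy Hv Ht.
  destruct n as [|n'].
  { unfold pev. simpl. rewrite Rabs_R0. lra. }
  set (n := S n').
  assert (Hk1 : 0 < 1 - th) by lra.
  set (k := / (1 - th)).
  assert (Hk : 1 <= k).
  { unfold k. rewrite <- Rinv_1. apply Rinv_le_contravar; lra. }
  assert (Hdist : forall i j, (i < n)%nat -> (j < n)%nat -> i <> j -> y i <> y j).
  { intros i j Hi Hj Hij E. pose proof (node_gap y h th i j Hh Hth (Hy i Hi) (Hy j Hj) Hij).
    rewrite E, Rminus_diag, Rabs_R0 in H.
    assert (0 < Rabs (INR i - INR j)).
    { apply Rabs_pos_lt. intro E2. apply Hij. apply INR_eq. lra. }
    assert (0 < Rabs (INR i - INR j) * (1 - th) * h) by (repeat apply Rmult_lt_0_compat; lra).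
    lra. }
  rewrite (MC.lagrange_id' n c y t ltac:(unfold n; lia) Hdist).
  assert (Hterm : forall i, (i < n)%nat ->
     Rabs (pev n c (y i) * rprod n (fun j => if Nat.eqb j i then 1 else (t - y j) / (y i - y j)))
       <= B * k ^ (S n) / h * Binomial.C n (S i)).
  { intros i Hi. rewrite Rabs_mult, rprod_abs.
    assert (Hyi := Hy i Hi).
    assert (Hyipos : 0 < y i).
    { assert (0 <= INR i) by apply pos_INR. nra. }
    assert (Ha : Rabs (pev n c (y i)) <= B * k / h).
    { pose proof (Hv i Hi).
      assert ((1 - th) * h <= y i). { assert (0 <= INR i) by apply pos_INR. nra. }
      apply (Rmult_le_reg_r (y i)); auto.
      apply Rle_trans with B; auto.
      unfold k. apply Rle_trans with (B * / (1 - th) / h * ((1 - th) * h)).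
      right. field. lra.
      apply Rmult_le_compat_l. apply Rmult_le_pos. apply Rmult_le_pos; auto.
      left; apply Rinv_0_lt_compat; lra. left; apply Rinv_0_lt_compat; lra. auto. }
    assert (Hr : rprod n (fun j => Rabs (if Nat.eqb j i then 1 else (t - y j) / (y i - y j)))
                  <= Vw n i * k ^ n).
    { unfold Vw. rewrite <- rprod_scale. apply rprod_le. intros j Hj. split. apply Rabs_pos.
      destruct (Nat.eqb_spec j i) as [E|E].
      - rewrite Rabs_R1. lra.
      - assert (Hyj := Hy j Hj).
        pose proof (node_gap y h th i j Hh Hth Hyi Hyj (fun H => E (eq_sym H))) as Hg.
        assert (Hij : 0 < Rabs (INR i - INR j)).
        { apply Rabs_pos_lt. intro E2. apply E. apply INR_eq. lra. }
        assert (Hgp : 0 < Rabs (INR i - INR j) * (1 - th) * h) by (repeat apply Rmult_lt_0_compat; lra).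
        rewrite Rabs_div.
        2:{ intro E3. apply (Hdist i j); auto. lra. }
        assert (Htj : Rabs (t - y j) <= (INR j + 1) * h).
        { assert (0 <= INR j) by apply pos_INR.
          assert ((1 - th) * h <= y j) by nra.
          rewrite Rabs_left1 by lra. lra. }
        apply Rle_trans with ((INR j + 1) * h / (Rabs (INR i - INR j) * (1 - th) * h)).
        + unfold Rdiv. apply Rmult_le_compat. apply Rabs_pos.
          left; apply Rinv_0_lt_compat; lra. auto.
          apply Rinv_le_contravar; auto.
        + right. unfold k. field. lra. }
    assert (HV : 0 <= Vw n i) by (rewrite Vw_binom by auto; apply binom_nonneg).
    rewrite Vw_binom in Hr by auto.
    apply Rle_trans with (B * k / h * (Binomial.C n (S i) * k ^ n)).
    apply Rmult_le_compat; auto. apply Rabs_pos.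
    apply rprod_nonneg. intros; apply Rabs_pos.
    right. simpl. field. lra. }
  eapply Rle_trans. apply Rmult_le_compat_r. apply Rmult_le_pos. apply pow_le; lra. lra.
  eapply Rle_trans. apply rsum_abs. apply rsum_le. exact Hterm.
  rewrite (rsum_ext n _ (fun i => Binomial.C n (S i) * (B * k ^ S n / h))) by (intros; ring).
  rewrite rsum_scale.
  assert (Hkk : k ^ S n * (1 - th) ^ S n = 1).
  { rewrite <- Rpow_mult_distr. unfold k. rewrite Rinv_l by lra. apply pow1. }
  pose proof (binom_sum n).
  replace (rsum n (fun i => Binomial.C n (S i)) * (B * k ^ S n / h) * ((1 - th) ^ S n * h))
    with (rsum n (fun i => Binomial.C n (S i)) * B * (k ^ S n * (1 - th) ^ S n)) by (field; lra).
  rewrite Hkk. nra.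
Qed.


Lemma cexpi_mod th : Cmod (cexpi th) = 1.
Proof.
  unfold Cmod, cexpi; simpl. pose proof (sin2_cos2 th). unfold Rsqr in H.
  replace (cos th * (cos th * 1) + sin th * (sin th * 1)) with 1 by lra. apply sqrt_1.
Qed.

Lemma Cmod_diff_lower (z w : C) : Cmod w = 1 -> 1 - Cmod z <= Cmod (z - w).
Proof.
  intros Hw. pose proof (Cmod_triangle (w - z) z).
  replace (w - z + z)%C with w in H by (apply injective_projections; simpl; ring).
  replace (w - z)%C with (- (z - w))%C in H by (apply injective_projections; simpl; ring).
  rewrite Cmod_opp in H. lra.
Qed.

Lemma Cmod_diff_upper (z w : C) : Cmod w = 1 -> Cmod z - 1 <= Cmod (z - w).
Proof.
  intros Hw. pose proof (Cmod_triangle (z - w) w).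
  replace (z - w + w)%C with z in H by (apply injective_projections; simpl; ring).
  lra.
Qed.

Lemma sq_lower a b : 0 <= a -> a <= b -> a ^ 2 <= b ^ 2.
Proof. intros; nra. Qed.

Lemma bernoulli x m : -1 <= x -> 1 + INR m * x <= (1 + x) ^ m.
Proof.
  intros Hx. induction m. simpl. lra.
  rewrite S_INR. simpl.
  assert (0 <= 1 + x) by lra.
  assert (0 <= INR m * x * x) by (pose proof (pos_INR m); nra).
  nra.
Qed.

Lemma pow2_ge_INR n : INR n <= 2 ^ n.
Proof.
  induction n. simpl; lra. rewrite S_INR. simpl.
  assert (1 <= 2 ^ n) by (apply pow_R1_Rle; lra). lra.
Qed.

Lemma pow_le_one x p : 0 <= x <= 1 -> x ^ p <= 1.
Proof.
  intros Hx. induction p; simpl. lra.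
  assert (0 <= x ^ p) by (apply pow_le; lra). nra.
Qed.

Lemma pow_le_self x p : 0 <= x <= 1 -> (1 <= p)%nat -> x ^ p <= x.
Proof.
  intros Hx Hp. destruct p. lia. simpl.
  assert (x ^ p <= 1) by (apply pow_le_one; lra). 
  assert (0 <= x ^ p) by (apply pow_le; lra). nra.
Qed.

Lemma cpev_split n a t : cpev (S n) a t = (a O + RtoC t * cpev n (fun k => a (S k)) t)%C.
Proof.
  unfold cpev. induction n.
  - simpl. apply injective_projections; simpl; ring.
  - change (csum (S (S n)) (fun k => a k * RtoC (t ^ k))%C) with
      (csum (S n) (fun k => a k * RtoC (t ^ k)) + a (S n) * RtoC (t ^ S n))%C.
    rewrite IHn. simpl. apply injective_projections; simpl; ring.
Qed.

Lemma pev_lin n (c1 c2 : nat -> R) u v s :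
  pev n (fun k => u * c1 k + v * c2 k) s = u * pev n c1 s + v * pev n c2 s.
Proof. unfold pev. induction n; simpl. ring. rewrite IHn. ring. Qed.

Lemma abs_CS (u v z : C) : Rabs (fst u * fst z + snd u * snd z) <= Cmod u * Cmod z.
Proof.
  destruct u as [u1 u2], z as [z1 z2]. simpl.
  apply Rabs_le. split.
  - pose proof (CS2 (- u1) (- u2) z1 z2).
    assert (Cmod (- u1, - u2) = Cmod (u1, u2)).
    { unfold Cmod; simpl. f_equal. ring. }
    rewrite H0 in H. lra.
  - apply CS2.
Qed.

Lemma f_within p L f D y : Cp_derivs p 0 L f D -> 0 <= y <= L ->
  filterlim f (within (fun z => 0 <= z <= L) (locally y)) (locally (f y)).
Proof.
  intros [H0 [_ H2]] Hy P HP.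
  assert (Hc := H2 O ltac:(lia) y Hy).
  rewrite <- (H0 y Hy) in HP. specialize (Hc P HP).
  unfold filtermap, within in *. destruct Hc as [e He]. exists e.
  intros z Hz Hz'. rewrite <- (H0 z Hz'). apply He; auto.
Qed.

Section Core.
Variables (p : nat) (L M : R) (f : R -> C) (D : nat -> R -> C) (phi0 phi1 b : R).
Hypothesis Hp : (1 <= p)%nat.
Hypothesis HL : 0 < L.
Hypothesis HM : 0 <= M.
Hypothesis Hb : 0 < b.
Hypothesis HbL : b <= L.
Hypothesis Hcp : Cp_derivs p 0 L f D.
Hypothesis Hf0 : f 0 = 0%C.
Hypothesis Hbound : forall t, 0 <= t <= L -> Cmod (D p t) <= M.
Hypothesis HMb : M * b ^ p <= INR (fact p).

Let J := RInt (fun t => Cmod (f t - cexpi (phi1 * t + phi0)) ^ 2) 0 L.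
Let a := fun k => (D k 0 * RtoC (/ INR (fact k)))%C.
Let n := (p - 1)%nat.
Let Sf := fun t => cpev n (fun k => a (S k)) t.

Lemma Hfc : forall y, 0 <= y <= L ->
  filterlim f (within (fun z => 0 <= z <= L) (locally y)) (locally (f y)).
Proof. intros; eapply f_within; eauto. Qed.

Lemma Hrem : forall t, 0 <= t <= b -> Cmod (f t - RtoC t * Sf t) <= t / b.
Proof.
  intros t Ht.
  destruct Hcp as [H0 [H1 H2]].
  pose proof (taylor p L M f D HL HM Hcp Hbound p (le_n p) t ltac:(lra)) as HT.
  rewrite Nat.sub_diag in HT. simpl (0 + _)%nat in HT.
  rewrite (H0 t ltac:(lra)) in HT.
  assert (Ep : p = S n) by (unfold n; lia).
  replace (cpev p (fun k => D k 0 * RtoC (/ INR (fact k)))%C t) with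
    (RtoC t * Sf t)%C in HT.
  2:{ unfold Sf. rewrite Ep, cpev_split. cbv beta.
      assert (Ea : a O = 0%C).
      { unfold a. rewrite (H0 0 ltac:(lra)), Hf0. apply injective_projections; simpl; ring. }
      unfold a at 1 in Ea. rewrite Ea.
      unfold a; apply injective_projections; simpl; ring. }

  eapply Rle_trans. exact HT.
  assert (Hfp := fact_INR_pos p).
  assert (Htb : 0 <= t / b <= 1).
  { split. apply Rmult_le_pos; [lra | left; apply Rinv_0_lt_compat; lra].
    apply (Rmult_le_reg_r b); auto. unfold Rdiv. rewrite Rmult_assoc, Rinv_l; lra. }
  apply Rle_trans with ((t / b) ^ p).
  - replace (t ^ p) with ((t / b) ^ p * b ^ p).
    2:{ rewrite <- Rpow_mult_distr. f_equal. field. lra. }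
    apply (Rmult_le_reg_r (INR (fact p))); auto.
    unfold Rdiv. rewrite Rmult_assoc, Rinv_l, Rmult_1_r by lra.
    assert (0 <= (t / b) ^ p) by (apply pow_le; lra).
    nra.
  - apply pow_le_self; auto.
Qed.


Lemma HcaseB (tau : R) : 0 < tau -> tau <= L ->
  (forall t, 0 < t < tau -> Cmod (f t) <= 1/3) -> 4 / 9 * tau <= J.
Proof.
  intros Htau HtauL Ht.
  replace (4 / 9 * tau) with (4 / 9 * (tau - 0)) by ring.
  apply (int_lower f L phi0 phi1 HL Hfc). lra. auto.
  intros t Htt. pose proof (Ht t Htt).
  pose proof (Cmod_diff_lower (f t) (cexpi (phi1 * t + phi0)) (cexpi_mod _)).
  replace (4/9) with ((2/3)^2) by field. apply sq_lower; lra.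
Qed.

Lemma core_bound : 4 * b / (27 * (5 * INR n * 2 ^ n + 1)) <= J.
Proof.
  set (K := 5 * INR n * 2 ^ n).
  assert (HK : 0 <= K) by (unfold K; pose proof (pos_INR n); pose proof (pow_le 2 n); nra).
  set (tau := b / (3 * (K + 1))).
  assert (Htau : 0 < tau) by (unfold tau; apply Rdiv_lt_0_compat; lra).
  assert (Htaub : tau <= b / 3).
  { unfold tau. unfold Rdiv. apply Rmult_le_compat_l. lra. apply Rinv_le_contravar; lra. }
  assert (Hgoal : 4 * b / (27 * (K + 1)) = 4 / 9 * tau) by (unfold tau; field; lra).
  rewrite Hgoal.
  destruct (Nat.eq_dec n 0) as [En|En].
  -
    apply HcaseB; auto. lra.
    intros t Ht. pose proof (Hrem t ltac:(lra)).
    assert (E : Sf t = 0%C) by (unfold Sf; rewrite En; reflexivity).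
    rewrite E in H. replace (f t - RtoC t * 0)%C with (f t) in H by (apply injective_projections; simpl; ring).
    assert (t / b <= 1/3).
    { apply (Rmult_le_reg_r b); auto. unfold Rdiv. rewrite Rmult_assoc, Rinv_l; lra. }
    lra.
  - assert (Hn1 : 1 <= INR n).
    { replace 1 with (INR 1) by reflexivity. apply le_INR. lia. }
    set (h := b / INR n). set (th := / (4 * INR n)).
    assert (Hh : 0 < h) by (unfold h; apply Rdiv_lt_0_compat; lra).
    assert (Hth : 0 < th <= 1/4).
    { unfold th. split. apply Rinv_0_lt_compat; lra.
      apply (Rmult_le_reg_r (4 * INR n)). lra. rewrite Rinv_l by lra. lra. }
    assert (Hnh : INR n * h = b) by (unfold h; field; lra).
    destruct (classic (exists j, (j < n)%nat /\ forall s, (INR j + 1 - th) * h <= s <= (INR j + 1) * h ->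
                                   3/2 <= Cmod (f s))) as [[j [Hj Hs]]|Hno].
    +
      assert (Hjn : INR j + 1 <= INR n) by (rewrite <- S_INR; apply le_INR; lia).
      assert (HA : 1/4 * ((INR j + 1) * h - (INR j + 1 - th) * h) <= J).
      { apply (int_lower f L phi0 phi1 HL Hfc).
        - split. assert (0 <= INR j) by apply pos_INR. nra. nra.
        - nra.
        - intros t Ht. pose proof (Hs t ltac:(lra)).
          pose proof (Cmod_diff_upper (f t) (cexpi (phi1 * t + phi0)) (cexpi_mod _)).
          replace (1/4) with ((1/2)^2) by field. apply sq_lower; lra. }
      eapply Rle_trans; [|exact HA].
      replace (1 / 4 * ((INR j + 1) * h - (INR j + 1 - th) * h)) with (b / (16 * INR n * INR n))
        by (unfold th, h; field; lra).
      unfold tau, K. pose proof (pow2_ge_INR n).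
      apply Rle_trans with (4 / 9 * (b / (3 * (5 * INR n * INR n + 1)))).
      * apply Rmult_le_compat_l. lra. unfold Rdiv. apply Rmult_le_compat_l. lra.
        apply Rinv_le_contravar. nra. nra.
      * unfold Rdiv. rewrite <- Rmult_assoc.
        replace (4 * / 9 * b) with (b * (4 / 9)) by (field).
        rewrite Rmult_assoc. apply Rmult_le_compat_l. lra.
        apply (Rmult_le_reg_r (3 * (5 * INR n * INR n + 1))). nra.
        rewrite Rmult_assoc, Rinv_l by nra.
        apply (Rmult_le_reg_r (16 * INR n * INR n)). nra.
        replace (/ (16 * INR n * INR n) * (3 * (5 * INR n * INR n + 1)) * (16 * INR n * INR n))
          with (3 * (5 * INR n * INR n + 1)) by (field; lra).
        nra.
    +
      set (P := fun j s => (INR j + 1 - th) * h <= s <= (INR j + 1) * h /\ Cmod (f s) < 3/2).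
      assert (Hex : forall j, (j < n)%nat -> exists s, P j s).
      { intros j Hj. apply NNPP. intros Hne. apply Hno. exists j. split; auto.
        intros s Hs. apply Rnot_lt_le. intros Hlt. apply Hne. exists s. split; auto. }
      set (y := fun j => ClassicalEpsilon.epsilon (inhabits 0) (P j)).
      assert (Hy : forall j, (j < n)%nat -> P j (y j)).
      { intros j Hj. unfold y. apply ClassicalEpsilon.epsilon_spec. apply Hex; auto. }
      apply HcaseB; auto. lra.
      intros t Ht.
      assert (Htb : t <= b) by lra.
      set (w := Sf t).
      set (c := fun k => fst w * fst (a (S k)) + snd w * snd (a (S k))).
      assert (Hpev : forall s, pev n c s = fst w * fst (Sf s) + snd w * snd (Sf s)).
      { intros s. unfold c. rewrite pev_lin. unfold Sf. rewrite fst_cpev, snd_cpev. reflexivity. }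
      assert (Hyb : forall j, (j < n)%nat -> 0 < y j <= b).
      { intros j Hj. destruct (Hy j Hj) as [[H1 H2] _].
        assert (INR j + 1 <= INR n) by (rewrite <- S_INR; apply le_INR; lia).
        assert (0 <= INR j) by apply pos_INR. split; nra. }
      assert (Hnodes : forall j, (j < n)%nat -> Rabs (pev n c (y j)) * y j <= Cmod w * (5/2)).
      { intros j Hj. rewrite Hpev. destruct (Hyb j Hj) as [Hy1 Hy2].
        eapply Rle_trans. apply Rmult_le_compat_r. lra. apply (abs_CS w w (Sf (y j))).
        rewrite Rmult_assoc. apply Rmult_le_compat_l. apply Cmod_ge_0.
        pose proof (Hrem (y j) ltac:(lra)).
        destruct (Hy j Hj) as [_ Hfy].
        assert (Hyy : Cmod (Sf (y j)) * y j = Cmod (RtoC (y j) * Sf (y j))).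
        { rewrite Cmod_mult, Cmod_R, Rabs_right by lra. ring. }
        rewrite Hyy.
        pose proof (Cmod_triangle (f (y j)) (- (f (y j) - RtoC (y j) * Sf (y j)))%C).
        replace (f (y j) + - (f (y j) - RtoC (y j) * Sf (y j)))%C with (RtoC (y j) * Sf (y j))%C in H0
          by (apply injective_projections; simpl; ring).
        rewrite Cmod_opp in H0.
        assert (y j / b <= 1).
        { apply (Rmult_le_reg_r b); auto. unfold Rdiv. rewrite Rmult_assoc, Rinv_l; lra. }
        lra. }
      assert (Htau2 : tau <= (1 - th) * h).
      { unfold tau, K, h. pose proof (pow2_ge_INR n).
        apply Rle_trans with (b / (3 * (5 * INR n * INR n + 1))).
        - unfold Rdiv. apply Rmult_le_compat_l. lra. apply Rinv_le_contravar. nra. nra.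
        - assert (Hx : b / (3 * (5 * INR n * INR n + 1)) <= 3 / 4 * (b / INR n)).
          { replace (3 / 4 * (b / INR n)) with (b / (4 * INR n / 3)) by (field; lra).
            unfold Rdiv at 1 3. apply Rmult_le_compat_l. lra. apply Rinv_le_contravar; nra. }
          assert (0 <= b / INR n) by (apply Rmult_le_pos; [lra| left; apply Rinv_0_lt_compat; lra]).
          nra. }
      pose proof (interp_bound n c y h th (Cmod w * (5/2)) t Hh ltac:(lra)
                   ltac:(pose proof (Cmod_ge_0 w); lra)
                   (fun j Hj => proj1 (Hy j Hj)) Hnodes ltac:(lra)) as HI.
      rewrite Hpev in HI.
      replace (fst w * fst (Sf t) + snd w * snd (Sf t)) with (Cmod w ^ 2) in HI
        by (rewrite Cmod_sq; fold w; ring).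
      rewrite Rabs_right in HI by (apply Rle_ge, pow2_ge_0).
      assert (Hbern : 1/2 <= (1 - th) ^ S n).
      { pose proof (bernoulli (- th) (S n) ltac:(lra)). rewrite S_INR in H.
        replace (1 + - th) with (1 - th) in H by ring.
        assert ((INR n + 1) * th <= 1/2).
        { unfold th. apply (Rmult_le_reg_r (4 * INR n)). lra.
          replace ((INR n + 1) * / (4 * INR n) * (4 * INR n)) with (INR n + 1) by (field; lra). lra. }
        lra. }
      assert (Hw : Cmod w <= K / b).
      { pose proof (Cmod_ge_0 w).
        destruct (Req_dec (Cmod w) 0) as [Hw0|Hw0].
        - rewrite Hw0. apply Rmult_le_pos; auto. left; apply Rinv_0_lt_compat; lra.
        - assert (Hw1 : Cmod w * ((1 - th) ^ S n * h) <= 5 / 2 * 2 ^ n).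
          { apply (Rmult_le_reg_l (Cmod w)). lra.
            replace (Cmod w * (Cmod w * ((1 - th) ^ S n * h))) with (Cmod w ^ 2 * ((1 - th) ^ S n * h)) by ring.
            lra. }
          assert (Hw2 : Cmod w * (1/2 * h) <= 5 / 2 * 2 ^ n).
          { eapply Rle_trans; [|exact Hw1]. apply Rmult_le_compat_l. lra.
            apply Rmult_le_compat_r; lra. }
          unfold K. apply (Rmult_le_reg_r (1/2 * h)). nra.
          eapply Rle_trans. exact Hw2. right. unfold h. field. lra. }
      pose proof (Hrem t ltac:(lra)).
      pose proof (Cmod_triangle (RtoC t * Sf t) (f t - RtoC t * Sf t)%C).
      replace (RtoC t * Sf t + (f t - RtoC t * Sf t))%C with (f t) in H0
        by (apply injective_projections; simpl; ring).
      rewrite Cmod_mult, Cmod_R, Rabs_right in H0 by lra. fold w in H0.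
      assert (Htk : t * Cmod w <= t * (K / b)) by (apply Rmult_le_compat_l; lra).
      assert (t * (K / b) + t / b <= 1/3).
      { replace (t * (K / b) + t / b) with (t * (K + 1) / b) by (field; lra).
        apply (Rmult_le_reg_r b); auto. unfold Rdiv. rewrite Rmult_assoc, Rinv_l by lra.
        assert (HH2 : t * (K + 1) <= tau * (K + 1)) by (apply Rmult_le_compat_r; lra).
        unfold tau in HH2. replace (b / (3 * (K + 1)) * (K + 1)) with (b / 3) in HH2 by (field; lra).
        lra. }
      fold w in H. lra.
Qed.

End Core.


Lemma exp_pow_nat x n : exp x ^ n = exp (INR n * x).
Proof.
  induction n. simpl. rewrite Rmult_0_l, exp_0. reflexivity.
  rewrite S_INR. simpl. rewrite IHn, <- exp_plus. f_equal. ring.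
Qed.

Lemma one_plus_inv_pow p : (1 <= p)%nat -> (1 + / INR p) ^ p <= 3.
Proof.
  intros Hp. assert (Hp0 : 0 < INR p) by (apply lt_0_INR; lia).
  apply Rle_trans with (exp (/ INR p) ^ p).
  - apply pow_incr. split. assert (0 < / INR p) by (apply Rinv_0_lt_compat; lra). lra.
    apply exp_ineq1_le.
  - rewrite exp_pow_nat. rewrite Rinv_r by lra. apply exp_le_3.
Qed.

Lemma fact_lower p : (1 <= p)%nat -> 3 * (INR p / 3) ^ p <= INR (fact p).
Proof.
  induction p; intros Hp. lia.
  destruct (Nat.eq_dec p 0) as [->|Hp0].
  - simpl. lra.
  - assert (IH := IHp ltac:(lia)).
    assert (HP : 0 < INR p) by (apply lt_0_INR; lia).
    rewrite fact_simpl, mult_INR, S_INR.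
    replace (3 * ((INR p + 1) / 3) ^ S p) with ((INR p + 1) * ((INR p + 1) / 3) ^ p)
      by (simpl; field).
    apply Rmult_le_compat_l. lra.
    replace ((INR p + 1) / 3) with ((INR p / 3) * (1 + / INR p)) by (field; lra).
    rewrite Rpow_mult_distr.
    pose proof (one_plus_inv_pow p ltac:(lia)).
    assert (0 <= (INR p / 3) ^ p) by (apply pow_le; lra).
    nra.
Qed.

Lemma W_ge p : (1 <= p)%nat ->
  6 <= INR (fact p) * (72 * 2 ^ p * (4 / (27 * (5 * INR (p - 1) * 2 ^ (p - 1) + 1)))) ^ p.
Proof.
  intros Hp.
  destruct (Nat.eq_dec p 1) as [->|Hp1].
  - simpl. lra.
  - set (n := (p - 1)%nat).
    assert (En : p = S n) by (unfold n; lia).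
    assert (Hn : 1 <= INR n) by (replace 1 with (INR 1) by reflexivity; apply le_INR; unfold n; lia).
    assert (H2n : 1 <= 2 ^ n) by (apply pow_R1_Rle; lra).
    assert (Hq : 3 / INR n <= 72 * 2 ^ p * (4 / (27 * (5 * INR n * 2 ^ n + 1)))).
    { rewrite En. simpl (2 ^ S n).
      apply (Rmult_le_reg_r (INR n * (27 * (5 * INR n * 2 ^ n + 1)))). nra.
      replace (3 / INR n * (INR n * (27 * (5 * INR n * 2 ^ n + 1)))) with (81 * (5 * INR n * 2 ^ n + 1))
        by (field; lra).
      replace (72 * (2 * 2 ^ n) * (4 / (27 * (5 * INR n * 2 ^ n + 1))) *
        (INR n * (27 * (5 * INR n * 2 ^ n + 1)))) with (576 * 2 ^ n * INR n) by (field; nra).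
      nra. }
    assert (H3 : 0 <= 3 / INR n) by (unfold Rdiv; apply Rmult_le_pos; [lra| left; apply Rinv_0_lt_compat; lra]).
    apply Rle_trans with (INR (fact p) * (3 / INR n) ^ p).
    2:{ apply Rmult_le_compat_l. left; apply fact_INR_pos. apply pow_incr. split; auto. }
    pose proof (fact_lower p Hp) as Hf.
    apply Rle_trans with (3 * (INR p / 3) ^ p * (3 / INR n) ^ p).
    2:{ apply Rmult_le_compat_r. apply pow_le; auto. auto. }
    rewrite Rmult_assoc, <- Rpow_mult_distr.
    replace (INR p / 3 * (3 / INR n)) with (1 + / INR n).
    2:{ rewrite En, S_INR. field. lra. }
    pose proof (bernoulli (/ INR n) p ltac:(assert (0 < / INR n) by (apply Rinv_0_lt_compat; lra); lra)).
    assert (INR p * / INR n >= 1).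
    { rewrite En, S_INR. apply Rle_ge. replace ((INR n + 1) * / INR n) with (1 + / INR n) by (field; lra).
      assert (0 < / INR n) by (apply Rinv_0_lt_compat; lra). lra. }
    lra.
Qed.


Lemma Rpower_pos x y : 0 < Rpower x y.
Proof. unfold Rpower. apply exp_pos. Qed.

Theorem corollary4p6 (lam : R) (p : nat) (Cp : R) (f : R -> C)
  (D : nat -> R -> C)
  (hlam : 0 < lam) (hp : (1 <= p)%nat) (hC : 0 < Cp)
  (hf : Cp_derivs p 0 (/ 2 * Rpower lam (- / 2)) f D)
  (hf0 : f 0 = 0%C)
  (hbound : forall t, 0 <= t <= / 2 * Rpower lam (- / 2) ->
     Cmod (D p t) <= Cp * Rpower lam (INR p / 2 + 1)) :
  forall phi0 phi1 : R,
    RInt (fun t => Cmod (f t - cexpi (phi1 * t + phi0)) ^ 2)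
         0 (/ 2 * Rpower lam (- / 2))
    >= Rpower lam (- / 2) / 9 *
       Rmin (Rpower 4 (- INR p - 5 / 2))
            (Rpower 4 (- ((INR p + 3) / 2)) * Rpower 6 (/ INR p)
             * Rpower Cp (- / INR p) * Rpower lam (- / INR p)).
Proof.
  intros phi0 phi1.
  assert (Hs : 0 < Rpower lam (- / 2)) by apply Rpower_pos.
  set (s := Rpower lam (- / 2)) in *.
  set (L := / 2 * s) in *.
  assert (HL : 0 < L) by (unfold L; lra).
  set (M := Cp * Rpower lam (INR p / 2 + 1)) in *.
  assert (HM : 0 < M) by (unfold M; apply Rmult_lt_0_compat; auto; apply Rpower_pos).
  set (n := (p - 1)%nat).
  assert (En : p = S n) by (unfold n; lia).
  set (Q := 4 / (27 * (5 * INR n * 2 ^ n + 1))).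
  assert (HK : 0 <= 5 * INR n * 2 ^ n) by (pose proof (pos_INR n); pose proof (pow_le 2 n); nra).
  assert (HQ : 0 < Q) by (unfold Q; apply Rdiv_lt_0_compat; lra).
  set (J := RInt (fun t => Cmod (f t - cexpi (phi1 * t + phi0)) ^ 2) 0 L).
  assert (Hcore : forall b, 0 < b -> b <= L -> M * b ^ p <= INR (fact p) -> Q * b <= J).
  { intros b Hb HbL HMb.
    pose proof (core_bound p L M f D phi0 phi1 b hp HL ltac:(lra) Hb HbL hf hf0 hbound HMb) as H.
    fold n in H. unfold Q. replace (4 / (27 * (5 * INR n * 2 ^ n + 1)) * b) with
       (4 * b / (27 * (5 * INR n * 2 ^ n + 1))) by (field; lra). exact H. }
  assert (Hp0 : 0 < INR p) by (apply lt_0_INR; lia).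
  apply Rle_ge.
  destruct (Rle_dec (M * L ^ p) (INR (fact p))) as [Hcase|Hcase].
  - apply Rle_trans with (Q * L); [| apply Hcore; auto; lra].
    apply Rle_trans with (s / 9 * Rpower 4 (- INR p - 5 / 2)).
    { apply Rmult_le_compat_l. lra. apply Rmin_l. }
    assert (Hsq : Rpower 4 (/ 2) = 2).
    { rewrite Rpower_sqrt by lra. replace 4 with (2 * 2) by ring. apply sqrt_square; lra. }
    assert (H4 : Rpower 4 (- INR p - 5 / 2) = / (4 ^ p * 32)).
    { replace (- INR p - 5 / 2) with (- (INR p + (INR 2 + / 2))) by (simpl; field).
      rewrite Rpower_Ropp, !Rpower_plus, Hsq. rewrite (Rpower_pow p 4), (Rpower_pow 2 4) by lra. simpl. f_equal. ring. }
    rewrite H4.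
    assert (H4n : 4 ^ p = 4 * (2 ^ n * 2 ^ n)).
    { rewrite En. simpl. rewrite <- Rpow_mult_distr. replace (2 * 2) with 4 by ring. reflexivity. }
    rewrite H4n.
    pose proof (pow2_ge_INR n). assert (H1 : 1 <= 2 ^ n) by (apply pow_R1_Rle; lra).
    unfold Q, L.
    assert (Hd : 0 < 27 * (5 * INR n * 2 ^ n + 1)) by lra.
    apply (Rmult_le_reg_r (27 * (5 * INR n * 2 ^ n + 1) * (4 * (2 ^ n * 2 ^ n) * 32) * 18 / s)).
    { apply Rdiv_lt_0_compat; auto. repeat apply Rmult_lt_0_compat; lra. }
    replace (s / 9 * / (4 * (2 ^ n * 2 ^ n) * 32) *
       (27 * (5 * INR n * 2 ^ n + 1) * (4 * (2 ^ n * 2 ^ n) * 32) * 18 / s))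
      with (2 * (27 * (5 * INR n * 2 ^ n + 1))) by (field; split; nra).
    replace (4 / (27 * (5 * INR n * 2 ^ n + 1)) * (/ 2 * s) *
       (27 * (5 * INR n * 2 ^ n + 1) * (4 * (2 ^ n * 2 ^ n) * 32) * 18 / s))
      with (4 * (4 * (2 ^ n * 2 ^ n) * 32) * 9) by (field; split; nra).
    nra.
  - apply Rnot_le_lt in Hcase.
    set (b := Rpower (INR (fact p) / M) (/ INR p)).
    assert (Hb : 0 < b) by apply Rpower_pos.
    assert (Hfp := fact_INR_pos p).
    assert (Hbp : b ^ p = INR (fact p) / M).
    { unfold b. rewrite <- Rpower_pow by apply Rpower_pos. rewrite Rpower_mult.
      rewrite Rinv_l by lra. apply Rpower_1. apply Rdiv_lt_0_compat; auto. }
    assert (HMb : M * b ^ p = INR (fact p)) by (rewrite Hbp; field; lra).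
    assert (HbL : b <= L).
    { apply Rnot_lt_le. intros HLb.
      assert (L ^ p <= b ^ p) by (apply pow_incr; lra).
      assert (M * L ^ p <= M * b ^ p) by (apply Rmult_le_compat_l; lra). lra. }
    apply Rle_trans with (Q * b); [| apply Hcore; auto; lra].
    apply Rle_trans with (s / 9 * (Rpower 4 (- ((INR p + 3) / 2)) * Rpower 6 (/ INR p)
             * Rpower Cp (- / INR p) * Rpower lam (- / INR p))).
    { apply Rmult_le_compat_l. lra. apply Rmin_r. }
    set (A := Rpower 4 (- ((INR p + 3) / 2))).
    set (B := Rpower 6 (/ INR p)).
    set (Cc := Rpower Cp (- / INR p)).
    set (E := Rpower lam (- / INR p)).
    assert (HA : 0 < A) by apply Rpower_pos. assert (HB : 0 < B) by apply Rpower_pos.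
    assert (HCc : 0 < Cc) by apply Rpower_pos. assert (HE : 0 < E) by apply Rpower_pos.
    set (X := s / 9 * (A * B * Cc * E)).
    assert (HX : 0 < X) by (unfold X; repeat apply Rmult_lt_0_compat; lra).
    apply Rnot_lt_le. intros Hlt.
    apply ln_increasing in Hlt; [| apply Rmult_lt_0_compat; auto].
    assert (Hln2 : ln 4 = 2 * ln 2).
    { replace 4 with (2 ^ 2) by ring. rewrite ln_pow by lra. simpl. ring. }
    assert (Hln72 : ln 72 = ln 9 + 3 * ln 2).
    { replace 72 with (9 * 2 ^ 3) by ring. rewrite ln_mult, ln_pow by lra. simpl. ring. }
    assert (HlnX : ln X = - / 2 * ln lam - ln 9 - (INR p + 3) / 2 * ln 4 + / INR p * ln 6
                          - / INR p * ln Cp - / INR p * ln lam).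
    { unfold X. unfold Rdiv. rewrite !ln_mult; try lra;
        try (apply Rinv_0_lt_compat; lra); try (repeat apply Rmult_lt_0_compat; lra).
      rewrite ln_Rinv by lra. unfold s, A, B, Cc, E. rewrite !ln_Rpower. lra. }
    assert (HlnM : ln M = ln Cp + (INR p / 2 + 1) * ln lam).
    { unfold M. rewrite ln_mult, ln_Rpower; auto. apply Rpower_pos. }
    assert (Hlnb : ln b = / INR p * (ln (INR (fact p)) - ln M)).
    { unfold b. rewrite ln_Rpower. unfold Rdiv. rewrite ln_mult, ln_Rinv; auto.
      apply Rinv_0_lt_compat; auto. }
    set (W := INR (fact p) * (72 * 2 ^ p * Q) ^ p).
    assert (HW6 : 6 <= W) by (unfold W, Q, n; apply W_ge; auto).
    assert (HlnW : ln W = ln (INR (fact p)) + INR p * (ln 72 + INR p * ln 2 + ln Q)).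
    { assert (P1 : 0 < 2 ^ p) by (apply pow_lt; lra).
      assert (P0 : 0 < 72 * 2 ^ p) by lra.
      assert (P2 : 0 < 72 * 2 ^ p * Q) by (apply Rmult_lt_0_compat; lra).
      unfold W. rewrite ln_mult; [| exact Hfp | apply pow_lt; exact P2].
      rewrite ln_pow by exact P2. rewrite ln_mult by assumption.
      rewrite ln_mult by lra. rewrite ln_pow by lra. ring. }
    assert (Hl6 : ln 6 <= ln W).
    { destruct (Req_dec W 6) as [->|Hne]. lra. left. apply ln_increasing; lra. }
    assert (Hkey : ln (Q * b) - ln X = / INR p * (ln W - ln 6)).
    { rewrite ln_mult by auto. rewrite HlnX, Hlnb, HlnM, HlnW, Hln72, Hln2. field. lra. }
    assert (0 <= / INR p * (ln W - ln 6)).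
    { apply Rmult_le_pos. left; apply Rinv_0_lt_compat; lra. lra. }
    lra.
Qed.
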